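(* Let $G$ be the Cayley graph of a finitely generated group with respect to a finite symmetric generating set, and suppose its volume growth satisfies $v(n)\succeq e^{n^{\alpha}}$ for some $0<\alpha<1$. Fix any $\beta<\frac{\alpha}{\alpha+1}$, and let $\{f(n)\}$ be a sequence of nonnegative integers with $f(n)=o(e^{n^{\beta}})$. Then $G$ does not satisfy the $\{f(n)\}$-containment property.
   Context: The volume growth is $v(n)=|B_n(\mathrm{id})|$, the number of group elements at word distance at most $n$ from the identity. For functions $g,h$, $g\preceq h$ means there is $C>0$ with $g(x)\leq C h(Cx)$ for all $x$, and $h\succeq g$ means $g\preceq h$. Firefighter process on a graph $G$ with a sequence of integers $\{f(n)\}$: an initial fire occupies a finite set of vertices; at each time $n\geq 1$, at most $f(n)$ vertices that are not on fire become protected, and then the fire spreads to all unprotected neighbours of vertices on fire; once a vertex is protected or on fire it stays so forever. $G$ has the $\{f(n)\}$-containment property if for every finite initial fire there is a protection strategy (protecting at most $f(n)$ vertices at time $n$) such that the set of burning vertices is eventually constant. *)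

(* Defs.v *)
From Stdlib Require Import Reals List Arith ClassicalEpsilon.
Import ListNotations.
Open Scope R_scope.

Record IsGroup (T : Type) (mul : T -> T -> T) (one : T) (inv : T -> T) : Prop := {
  grp_assoc : forall x y z, mul x (mul y z) = mul (mul x y) z;
  grp_one_l : forall x, mul one x = x;
  grp_one_r : forall x, mul x one = x;
  grp_inv_l : forall x, mul (inv x) x = one;
  grp_inv_r : forall x, mul x (inv x) = one
}.

Section Cayley.
Context {T : Type} (mul : T -> T -> T) (one : T) (inv : T -> T) (Sg : list T).

Fixpoint word_eval (w : list T) : T :=
  match w with
  | [] => one
  | s :: w' => mul s (word_eval w')
  end.

Definition symmetric_set : Prop := forall s, In s Sg -> In (inv s) Sg.

(** S generates the group: every element is a product of elements of S
    (inverses are not needed since Sg is symmetric). *)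
Definition generates : Prop :=
  forall x : T, exists w : list T, Forall (fun s => In s Sg) w /\ word_eval w = x.

Definition word_le (n : nat) (x : T) : Prop :=
  exists w : list T, Forall (fun s => In s Sg) w /\ (length w <= n)%nat /\ word_eval w = x.

Definition ball_card (n m : nat) : Prop :=
  exists l : list T, NoDup l /\ length l = m /\ (forall x, In x l <-> word_le n x).

(** Volume growth v(n) = |B_n(id)| (the ball is finite, so ball_card n
    has a unique solution; epsilon picks it). *)
Definition vol (n : nat) : nat := epsilon (inhabits 0%nat) (fun m => ball_card n m).

(** Firefighter process on the Cayley graph: vertices are elements of T,
    x ~ y iff y = x * s for some s in S. *)

Definition protected (A : nat -> T -> Prop) (n : nat) (y : T) : Prop :=
  exists k, (1 <= k <= n)%nat /\ A k y.

Fixpoint burning (F0 : list T) (A : nat -> T -> Prop) (n : nat) : T -> Prop :=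
  match n with
  | O => fun y => In y F0
  | S n' => fun y =>
      burning F0 A n' y \/
      ((exists x s, burning F0 A n' x /\ In s Sg /\ y = mul x s) /\ ~ protected A (S n') y)
  end.

Definition valid_strategy (f : nat -> nat) (F0 : list T) (A : nat -> T -> Prop) : Prop :=
  forall n, (1 <= n)%nat ->
    (exists l : list T, (length l <= f n)%nat /\ forall y, A n y -> In y l) /\
    (forall y, A n y -> ~ burning F0 A (n - 1) y).

Definition containment (f : nat -> nat) : Prop :=
  forall F0 : list T, exists A : nat -> T -> Prop,
    valid_strategy f F0 A /\
    exists N, forall n, (N <= n)%nat -> forall y, burning F0 A n y <-> burning F0 A N y.

End Cayley.

(* Main.v *)
Require Import Defs.
From Stdlib Require Import Reals List Arith.
From Stdlib Require Import ZArith Lia Lra ClassicalEpsilon Classical Bool.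
Import ListNotations.
Open Scope R_scope.

Lemma exp_le x y : x <= y -> exp x <= exp y.
Proof. intros [H|H]; [left; apply exp_increasing; auto| subst; lra]. Qed.

Lemma exp_le_inv x y : exp x <= exp y -> x <= y.
Proof. intros H. destruct (Rle_or_lt x y) as [|H']; auto. apply exp_increasing in H'. lra. Qed.

Lemma Rpower_pos x e : 0 < Rpower x e.
Proof. unfold Rpower. apply exp_pos. Qed.

Lemma Rpower_ge1 x e : 1 <= x -> 0 <= e -> 1 <= Rpower x e.
Proof. intros H1 H2. rewrite <- (Rpower_O x) by lra. apply Rle_Rpower; auto. Qed.

Lemma ln_le_self x : 0 < x -> ln x <= x.
Proof. intros H. pose proof (exp_ineq1_le (ln x)). rewrite exp_ln in H0 by auto. lra. Qed.

Lemma nat_between y : 0 <= y -> exists n:nat, y <= INR n <= y + 1.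
Proof.
  intros Hy. destruct (archimed y) as [H1 H2].
  assert (Hz : (0 <= up y)%Z). { apply le_IZR. simpl. lra. }
  exists (Z.to_nat (up y)). rewrite INR_IZR_INZ, Z2Nat.id by auto. lra.
Qed.

Lemma nat_above y : exists n:nat, y <= INR n.
Proof.
  destruct (nat_between (Rmax y 0)) as [n Hn]. apply Rmax_r.
  exists n. pose proof (Rmax_l y 0). lra.
Qed.

Lemma large e c : 0 < e -> exists T:nat, (1 <= T)%nat /\ forall x, INR T <= x -> c <= Rpower x e.
Proof.
  intros He. destruct (nat_above (Rmax 1 (Rpower (Rmax c 1) (/ e)))) as [T HT].
  exists T. pose proof (Rmax_l 1 (Rpower (Rmax c 1) (/ e))).
  pose proof (Rmax_r 1 (Rpower (Rmax c 1) (/ e))).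
  split. { apply INR_le. simpl. lra. }
  intros x Hx.
  assert (Hc : c <= Rmax c 1) by apply Rmax_l.
  assert (Hc1 : 0 < Rmax c 1) by (pose proof (Rmax_r c 1); lra).
  apply Rle_trans with (Rmax c 1); auto.
  replace (Rmax c 1) with (Rpower (Rpower (Rmax c 1) (/ e)) e).
  - apply Rle_Rpower_l; [lra|]. split; [apply Rpower_pos|lra].
  - rewrite Rpower_mult. replace (/ e * e) with 1 by (field; lra). apply Rpower_1; auto.
Qed.


Lemma Rpower_split x a b : Rpower x (a + b) = Rpower x a * Rpower x b.
Proof. apply Rpower_plus. Qed.

Lemma Rpower_x1 x : 0 < x -> Rpower x 1 = x.
Proof. apply Rpower_1. Qed.

Lemma key_real (alpha gam b1 C M0 : R) :
  0 < alpha -> 0 < gam -> gam + gam / alpha < 1 -> 0 < b1 -> b1 < gam ->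
  1 <= C -> 0 <= M0 ->
  exists T : nat, (1 <= T)%nat /\ forall x, INR T <= x -> forall n : nat,
    Rpower (Rpower (x + 1) gam + ln (2 * C)) (/ alpha) <= INR n <=
    Rpower (Rpower (x + 1) gam + ln (2 * C)) (/ alpha) + 1 ->
    exp (Rpower (x + 1) gam) <=
    exp (Rpower x gam) + exp (Rpower x gam) / (2 * (C * INR n))
      - (M0 + x * exp (Rpower x b1)).
Proof.
  intros Ha Hg Hga Hb1 Hb1g HC HM0.
  assert (Hga0 : 0 < gam / alpha) by (unfold Rdiv; apply Rmult_lt_0_compat; auto; apply Rinv_0_lt_compat; auto).
  assert (Hg1 : gam < 1) by lra.
  set (K1 := Rpower 3 (/ alpha) + 1).
  set (K2 := 4 * C * K1 * (M0 + 1)).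
  set (del := 1 - gam - gam / alpha).
  assert (Hdel : 0 < del) by (unfold del; lra).
  assert (HK1 : 1 < K1) by (unfold K1; pose proof (Rpower_pos 3 (/alpha)); lra).
  assert (HK2 : 0 < K2) by (unfold K2; apply Rmult_lt_0_compat; [|lra]; nra).
  destruct (large del (8 * C * K1) Hdel) as [T1 [HT1 H1]].
  destruct (large gam (ln (2 * C)) Hg) as [T2 [HT2 H2]].
  destruct (large (gam - b1) 2) as [T3 [HT3 H3]]; [lra|].
  destruct (large (gam / 2) (16 / gam)) as [T4 [HT4 H4]]; [lra|].
  destruct (large gam (4 * ln K2) Hg) as [T5 [HT5 H5]].
  exists (Nat.max T1 (Nat.max T2 (Nat.max T3 (Nat.max T4 T5)))).
  split; [lia|].
  intros x Hx n Hn.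
  assert (HTi : forall Ti, (Ti <= Nat.max T1 (Nat.max T2 (Nat.max T3 (Nat.max T4 T5))))%nat -> INR Ti <= x).
  { intros Ti Hi. apply Rle_trans with (2 := Hx). apply le_INR; auto. }
  specialize (H1 x (HTi T1 ltac:(lia))).
  specialize (H2 x (HTi T2 ltac:(lia))).
  specialize (H3 x (HTi T3 ltac:(lia))).
  specialize (H4 x (HTi T4 ltac:(lia))).
  specialize (H5 x (HTi T5 ltac:(lia))).
  assert (Hx1 : 1 <= x).
  { apply Rle_trans with (2 := HTi T1 ltac:(lia)). apply (le_INR 1). auto. }
  assert (Hx0 : 0 < x) by lra.
  set (xg := Rpower x gam) in *.
  set (E := exp xg).
  assert (Hxg1 : 1 <= xg) by (apply Rpower_ge1; lra).
  assert (Ha1 : Rpower (x + 1) gam <= xg + Rpower x (gam - 1)).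
  { replace (x + 1) with (x * (1 + / x)) by (field; lra).
    rewrite <- Rpower_mult_distr; [|lra|].
    2:{ pose proof (Rinv_0_lt_compat x Hx0). lra. }
    assert (Hi : Rpower (1 + / x) gam <= 1 + / x).
    { rewrite <- (Rpower_x1 (1 + / x)) at 2.
      - apply Rle_Rpower; [|lra]. pose proof (Rinv_0_lt_compat x Hx0). lra.
      - pose proof (Rinv_0_lt_compat x Hx0). lra. }
    replace (gam - 1) with (gam + - (1)) by ring.
    rewrite Rpower_split, Rpower_Ropp, Rpower_x1 by lra.
    fold xg. assert (0 < xg) by (unfold xg; apply Rpower_pos).
    apply Rle_trans with (xg * (1 + / x)).
    + apply Rmult_le_compat_l; lra.
    + right. field. lra. }
  assert (Hgm1 : Rpower x (gam - 1) <= xg).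
  { unfold xg. apply Rle_Rpower; lra. }
  assert (Hd0 : xg <= Rpower (x + 1) gam).
  { unfold xg. apply Rle_Rpower_l; lra. }
  assert (Hxp1 : 1 <= Rpower (x + 1) gam) by lra.
  assert (Hl2C : 0 < ln (2 * C)).
  { rewrite <- ln_1. apply ln_increasing; lra. }
  set (y := Rpower (Rpower (x + 1) gam + ln (2 * C)) (/ alpha)) in *.
  assert (Hy1 : 1 <= y).
  { unfold y. apply Rpower_ge1; [lra|]. left. apply Rinv_0_lt_compat. auto. }
  assert (Hxga : 1 <= Rpower x (gam / alpha)).
  { apply Rpower_ge1; [lra|]. unfold Rdiv. left. apply Rmult_lt_0_compat; auto. apply Rinv_0_lt_compat; auto. }
  assert (Hy : y <= Rpower 3 (/ alpha) * Rpower x (gam / alpha)).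
  { unfold y. apply Rle_trans with (Rpower (3 * xg) (/ alpha)).
    - apply Rle_Rpower_l. { left. apply Rinv_0_lt_compat; auto. } lra.
    - rewrite <- Rpower_mult_distr by (try lra; unfold xg; apply Rpower_pos).
      unfold xg. rewrite Rpower_mult. right. f_equal. }
  set (xa := Rpower x (gam / alpha)) in *.
  set (R := C * INR n).
  assert (HR1 : 1 <= R) by (unfold R; nra).
  assert (HRb : R <= C * K1 * xa).
  { unfold R, K1. nra. }
  assert (Hprod : Rpower x (gam - 1) * xa * Rpower x del = 1).
  { unfold xa. rewrite <- !Rpower_split.
    replace (gam - 1 + gam / alpha + del) with 0 by (unfold del; ring).
    apply Rpower_O; lra. }
  set (d := Rpower (x + 1) gam - xg).
  assert (Hd : 8 * R * d <= 1).
  { assert (0 <= d) by (unfold d; lra).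
    assert (Hxdel : 0 < Rpower x del) by apply Rpower_pos.
    assert (Hxgm : 0 < Rpower x (gam - 1)) by apply Rpower_pos.
    assert (d <= Rpower x (gam - 1)) by (unfold d; lra).
    assert (8 * R * d <= 8 * C * K1 * xa * Rpower x (gam - 1)).
    { apply Rmult_le_compat; try nra. }
    assert (Hq : 8 * C * K1 * xa * Rpower x (gam - 1) * Rpower x del = 8 * C * K1 * (Rpower x (gam - 1) * xa * Rpower x del)) by ring.
    rewrite Hprod, Rmult_1_r in Hq.
    assert (8 * C * K1 * xa * Rpower x (gam - 1) <= 1).
    { apply Rmult_le_reg_r with (Rpower x del); auto. nra. }
    lra. }
  assert (Hd0' : 0 <= d) by (unfold d; lra).
  assert (Hexpd : exp d <= 1 + 2 * d).
  { pose proof (exp_ineq1_le (- d)). rewrite exp_Ropp in H.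
    assert (Hed : 0 < exp d) by apply exp_pos.
    assert (d <= 1/8) by nra.
    assert (1 - d <= / exp d) by lra.
    assert ((1 - d) * exp d <= 1).
    { replace 1 with (/ exp d * exp d) at 2 by (field; lra). apply Rmult_le_compat_r; lra. }
    nra. }
  assert (HE1 : exp (Rpower (x + 1) gam) <= E * (1 + / (4 * R))).
  { replace (Rpower (x + 1) gam) with (xg + d) by (unfold d; ring).
    rewrite exp_plus. fold E. assert (0 < E) by apply exp_pos.
    apply Rmult_le_compat_l; [lra|].
    assert (2 * d <= / (4 * R)).
    { apply Rmult_le_reg_r with (4 * R); [lra|]. rewrite Rinv_l by lra. lra. }
    lra. }
  set (e1 := exp (Rpower x b1)).
  assert (He1 : 1 <= e1).
  { unfold e1. rewrite <- exp_0. apply exp_le. left; apply Rpower_pos. }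
  assert (Hxa_x : xa <= x).
  { unfold xa. rewrite <- (Rpower_x1 x) at 2 by lra. apply Rle_Rpower; lra. }
  assert (HP1 : 4 * R * (M0 + x * e1) <= K2 * (x * x) * e1).
  { unfold K2. assert (1 <= x * e1) by nra.
    assert (M0 + x * e1 <= (M0 + 1) * x * e1) by nra.
    assert (4 * R <= 4 * C * K1 * x) by nra.
    apply Rle_trans with (4 * C * K1 * x * ((M0 + 1) * x * e1)).
    - apply Rmult_le_compat; nra.
    - right; ring. }
  assert (Hxb : Rpower x b1 <= xg / 2).
  { assert (xg = Rpower x b1 * Rpower x (gam - b1)).
    { unfold xg. rewrite <- Rpower_split. f_equal; ring. }
    pose proof (Rpower_pos x b1). nra. }
  assert (Hxh : Rpower x (gam / 2) * Rpower x (gam / 2) = xg).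
  { unfold xg. rewrite <- Rpower_split. f_equal; field. }
  assert (Hlnx : ln x <= 2 / gam * Rpower x (gam / 2)).
  { pose proof (ln_le_self (Rpower x (gam / 2)) (Rpower_pos _ _)).
    rewrite ln_Rpower in H.
    apply Rmult_le_reg_l with (gam / 2); [lra|].
    replace (gam / 2 * (2 / gam * Rpower x (gam / 2))) with (Rpower x (gam / 2)) by (field; lra).
    lra. }
  assert (Hpoly : K2 * (x * x) <= exp (xg / 2)).
  { replace (K2 * (x * x)) with (exp (ln K2 + 2 * ln x)).
    - apply exp_le.
      assert (2 / gam * Rpower x (gam / 2) * 8 <= xg).
      { rewrite <- Hxh. pose proof (Rpower_pos x (gam / 2)).
        replace (2 / gam * Rpower x (gam / 2) * 8) with (Rpower x (gam / 2) * (16 / gam)) by (field; lra).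
        apply Rmult_le_compat_l; lra. }
      lra.
    - rewrite exp_plus, exp_ln by auto.
      replace (2 * ln x) with (ln x + ln x) by ring. rewrite exp_plus, exp_ln by lra. ring. }
  assert (HP2 : 4 * R * (M0 + x * e1) <= E).
  { apply Rle_trans with (1 := HP1).
    unfold E. replace xg with (xg / 2 + xg / 2) by field.
    rewrite exp_plus. apply Rmult_le_compat; try nra.
    unfold e1. apply exp_le. auto. }
  fold e1. fold E. fold R.
  assert (0 < E) by apply exp_pos.
  assert (HPE : M0 + x * e1 <= E / (4 * R)).
  { unfold Rdiv. apply Rmult_le_reg_l with (4 * R); [lra|].
    replace (4 * R * (E * / (4 * R))) with E by (field; lra). lra. }
  assert (E / (2 * R) = 2 * (E / (4 * R))) by (field; lra).
  assert (E * (1 + / (4 * R)) = E + E / (4 * R)) by (field; lra).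
  lra.
Qed.


Fixpoint Psum (f : nat -> nat) (t : nat) : nat :=
  match t with O => O | S t' => (Psum f t' + f (S t'))%nat end.

Lemma Psum_mono f m n : (m <= n)%nat -> (Psum f m <= Psum f n)%nat.
Proof. induction 1; simpl; lia. Qed.

Lemma Pbound f b1 N1 : 0 < b1 -> (1 <= N1)%nat ->
  (forall n, (N1 <= n)%nat -> INR (f n) <= exp (Rpower (INR n) b1)) ->
  forall t, INR (Psum f t) <= INR (Psum f N1) + INR t * exp (Rpower (INR t) b1).
Proof.
  intros Hb HN Hf t. induction t as [|t IH].
  - simpl. pose proof (pos_INR (Psum f N1)). lra.
  - destruct (le_lt_dec (S t) N1) as [Hle|Hlt].
    + apply Rle_trans with (INR (Psum f N1)).
      * apply le_INR, Psum_mono; auto.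
      * pose proof (pos_INR (S t)). pose proof (exp_pos (Rpower (INR (S t)) b1)). nra.
    + simpl Psum. rewrite plus_INR.
      assert (Ht1 : 1 <= INR t) by (apply (le_INR 1); lia).
      assert (Hm : exp (Rpower (INR t) b1) <= exp (Rpower (INR (S t)) b1)).
      { apply exp_le. apply Rle_Rpower_l; [lra|]. rewrite S_INR. lra. }
      specialize (Hf (S t) ltac:(lia)).
      set (e := exp (Rpower (INR (S t)) b1)) in *. rewrite S_INR. pose proof (pos_INR t).
      assert (INR t * exp (Rpower (INR t) b1) <= INR t * e)
        by (apply Rmult_le_compat_l; lra).
      lra.
Qed.

Lemma growth_main (alpha beta : R) (C : nat) (f vol : nat -> nat) :
  0 < alpha -> alpha < 1 -> (0 < C)%nat ->
  (forall n : nat, exp (Rpower (INR n) alpha) <= INR C * INR (vol (C * n)%nat)) ->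
  beta < alpha / (alpha + 1) ->
  (forall eps : R, 0 < eps -> exists N : nat, forall n : nat, (N <= n)%nat ->
          INR (f n) <= eps * exp (Rpower (INR n) beta)) ->
  exists B0 : nat, forall b : nat -> nat,
    (forall t, (b t <= b (S t))%nat) ->
    (forall t r, (2 * b t <= vol r)%nat ->
        INR (b t) <= 2 * INR r * (INR (b (S t)) + INR (Psum f (S t)) - INR (b t))) ->
    (B0 <= b O)%nat -> forall M : nat, exists t, (M < b t)%nat.
Proof.
  intros Ha Ha1 HC Hgr Hb Hf.
  set (q := alpha / (alpha + 1)) in *.
  assert (Hq : 0 < q < 1).
  { unfold q. split.
    - unfold Rdiv. apply Rmult_lt_0_compat; [lra|apply Rinv_0_lt_compat; lra].
    - apply Rmult_lt_reg_r with (alpha + 1); [lra|]. unfold Rdiv.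
      rewrite Rmult_assoc, Rinv_l by lra. lra. }
  set (m := Rmax beta 0).
  assert (Hm : beta <= m /\ 0 <= m /\ m < q).
  { unfold m. split; [apply Rmax_l|]. split; [apply Rmax_r|].
    apply Rmax_lub_lt; lra. }
  set (gam := (m + q) / 2).
  set (b1 := (m + gam) / 2).
  assert (Hgq : gam < q) by (unfold gam; lra).
  assert (Hg0 : 0 < gam) by (unfold gam; lra).
  assert (Hb10 : 0 < b1) by (unfold b1, gam; lra).
  assert (Hb1g : b1 < gam) by (unfold b1, gam; lra).
  assert (Hbb1 : beta <= b1) by (unfold b1, gam; lra).
  assert (Hga : gam + gam / alpha < 1).
  { assert (gam * (alpha + 1) < alpha).
    { apply Rlt_le_trans with (q * (alpha + 1)).
      - apply Rmult_lt_compat_r; lra.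
      - unfold q. right. field. lra. }
    assert (gam + gam / alpha = gam * (alpha + 1) / alpha) by (field; lra).
    rewrite H0. apply Rmult_lt_reg_r with alpha; auto. unfold Rdiv.
    rewrite Rmult_assoc, Rinv_l by lra. lra. }
  destruct (Hf 1 Rlt_0_1) as [N1 HN1].
  set (N1' := Nat.max N1 1).
  assert (Hf' : forall n, (N1' <= n)%nat -> INR (f n) <= exp (Rpower (INR n) b1)).
  { intros n Hn. specialize (HN1 n ltac:(unfold N1' in Hn; lia)).
    rewrite Rmult_1_l in HN1. apply Rle_trans with (1 := HN1).
    apply exp_le. apply Rle_Rpower; [|lra]. apply (le_INR 1). unfold N1' in Hn; lia. }
  pose proof (Pbound f b1 N1' Hb10 ltac:(unfold N1'; lia) Hf') as HP.
  set (M0 := INR (Psum f N1')) in *.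
  assert (HC1 : 1 <= INR C) by (apply (le_INR 1); lia).
  destruct (key_real alpha gam b1 (INR C) M0 Ha Hg0 Hga Hb10 Hb1g HC1 (pos_INR _))
    as [T [HT Hkey]].
  destruct (nat_above (exp (Rpower (INR T) gam))) as [B0 HB0].
  exists B0. intros b Hmono Hstep Hb0.
  assert (Hclaim : forall t, exp (Rpower (INR (t + T)) gam) <= INR (b t)).
  { induction t as [|t IH].
    - simpl. apply Rle_trans with (1 := HB0). apply le_INR. auto.
    - set (x := INR (t + T)) in *.
      assert (HxT : INR T <= x) by (unfold x; apply le_INR; lia).
      assert (Hx1 : INR (S t + T) = x + 1) by (unfold x; rewrite <- S_INR; f_equal).
      rewrite Hx1.
      destruct (Rle_or_lt (exp (Rpower (x + 1) gam)) (INR (b t))) as [Hc|Hc].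
      + apply Rle_trans with (1 := Hc). apply le_INR. auto.
      + set (y := Rpower (Rpower (x + 1) gam + ln (2 * INR C)) (/ alpha)).
        destruct (nat_between y) as [n Hn]; [left; apply Rpower_pos|].
        specialize (Hkey x HxT n Hn).
        assert (Hy0 : 0 < y) by apply Rpower_pos.
        assert (Hn0 : 0 < INR n) by lra.
        assert (Hl2C : 0 < ln (2 * INR C)).
        { rewrite <- ln_1. apply ln_increasing; lra. }
        assert (Hna : Rpower (x + 1) gam + ln (2 * INR C) <= Rpower (INR n) alpha).
        { apply Rle_trans with (Rpower y alpha).
          - unfold y. rewrite Rpower_mult. rewrite Rinv_l by lra.
            rewrite Rpower_x1; [lra|]. pose proof (Rpower_pos (x + 1) gam). lra.
          - apply Rle_Rpower_l; lra. }
        assert (Hvol : 2 * exp (Rpower (x + 1) gam) <= INR (vol (C * n)%nat)).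
        { pose proof (Hgr n) as Hg. apply exp_le in Hna.
          rewrite exp_plus, exp_ln in Hna by lra.
          apply Rmult_le_reg_l with (INR C); [lra|]. nra. }
        assert (Hbv : (2 * b t <= vol (C * n))%nat).
        { apply INR_le. rewrite mult_INR. simpl (INR 2). lra. }
        specialize (Hstep t (C * n)%nat Hbv). rewrite mult_INR in Hstep.
        set (R := INR C * INR n) in *.
        assert (HR : 0 < R) by (unfold R; nra).
        assert (HPs : INR (Psum f (S t)) <= M0 + x * exp (Rpower x b1)).
        { apply Rle_trans with (1 := HP (S t)).
          assert (HSt : INR (S t) <= x) by (unfold x; apply le_INR; lia).
          assert (0 < INR (S t)) by (apply lt_0_INR; lia).
          assert (exp (Rpower (INR (S t)) b1) <= exp (Rpower x b1)).
          { apply exp_le, Rle_Rpower_l; lra. }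
          pose proof (exp_pos (Rpower (INR (S t)) b1)). nra. }
        set (E := exp (Rpower x gam)) in *.
        assert (Hbt2 : INR (b t) + INR (b t) / (2 * R) <= INR (b (S t)) + INR (Psum f (S t))).
        { assert (INR (b t) / (2 * R) <= INR (b (S t)) + INR (Psum f (S t)) - INR (b t)); [|lra].
          unfold Rdiv. apply Rmult_le_reg_l with (2 * R); [lra|].
          replace (2 * R * (INR (b t) * / (2 * R))) with (INR (b t)) by (field; lra). lra. }
        assert (E + E / (2 * R) <= INR (b t) + INR (b t) / (2 * R)).
        { unfold Rdiv. assert (0 < / (2 * R)) by (apply Rinv_0_lt_compat; lra). nra. }
        lra. }
  intros M. destruct (large gam (INR M) Hg0) as [T' [_ HT']].
  exists T'. specialize (Hclaim T').
  assert (INR M <= Rpower (INR (T' + T)) gam) by (apply HT', le_INR; lia).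
  pose proof (exp_ineq1_le (Rpower (INR (T' + T)) gam)).
  apply INR_lt. lra.
Qed.

Open Scope nat_scope.

Lemma finite_sub {T} (dec : forall x y : T, {x = y} + {x <> y}) (P : T -> Prop) l :
  (forall y, P y -> In y l) -> exists L, NoDup L /\ forall y, In y L <-> P y.
Proof.
  intros H.
  exists (filter (fun y => if excluded_middle_informative (P y) then true else false) (nodup dec l)).
  split.
  - apply NoDup_filter, NoDup_nodup.
  - intros y. rewrite filter_In, nodup_In. split.
    + intros [_ Hy]. destruct (excluded_middle_informative (P y)); auto; discriminate.
    + intros Hy. split; auto. destruct (excluded_middle_informative (P y)); auto.
Qed.

Lemma card_unique {T} (L1 L2 : list T) : NoDup L1 -> NoDup L2 ->
  (forall y, In y L1 <-> In y L2) -> length L1 = length L2.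
Proof.
  intros H1 H2 H. apply Nat.le_antisymm; apply NoDup_incl_length; auto; intros y; apply H.
Qed.

Lemma length_cover {T} (l l1 l2 : list T) : NoDup l ->
  (forall y, In y l -> In y l1 \/ In y l2) -> length l <= length l1 + length l2.
Proof.
  intros Hn H. rewrite <- length_app. apply NoDup_incl_length; auto.
  intros y Hy. apply in_or_app. auto.
Qed.

Lemma NoDup_map_inj {T U} (f : T -> U) l : (forall x y, f x = f y -> x = y) ->
  NoDup l -> NoDup (map f l).
Proof. intros Hi Hn. apply NoDup_map_NoDup_ForallPairs; auto. intros a b _ _. apply Hi. Qed.

Definition sumf {T} (h : T -> nat) (l : list T) : nat := fold_right (fun x acc => h x + acc) 0 l.

Lemma sumf_plus {T} (h1 h2 : T -> nat) l : sumf (fun x => h1 x + h2 x) l = sumf h1 l + sumf h2 l.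
Proof. induction l; simpl; lia. Qed.

Lemma sumf_le_const {T} (h : T -> nat) l k : (forall x, In x l -> h x <= k) -> sumf h l <= length l * k.
Proof. induction l; simpl; intros H; auto. specialize (IHl (fun x Hx => H x (or_intror Hx))).
  specialize (H a (or_introl eq_refl)). lia. Qed.

Lemma sumf_ext {T} (h1 h2 : T -> nat) l : (forall x, h1 x = h2 x) -> sumf h1 l = sumf h2 l.
Proof. intros H; induction l; simpl; auto. Qed.

Lemma sumf_ind {T U} (R : T -> U -> bool) a (B : list U) :
  sumf (fun g => if R a g then 1 else 0) B = length (filter (R a) B).
Proof. induction B; simpl; auto. destruct (R a a0); simpl; lia. Qed.

Lemma double_count {T U} (R : T -> U -> bool) (A : list T) (B : list U) :
  sumf (fun g => length (filter (fun a => R a g) A)) B =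
  sumf (fun a => length (filter (fun g => R a g) B)) A.
Proof.
  induction A as [|a A IH]; simpl.
  - induction B; simpl; auto.
  - rewrite <- IH.
    rewrite (sumf_ext _ (fun g => (if R a g then 1 else 0) + length (filter (fun a0 => R a0 g) A))).
    + rewrite sumf_plus. f_equal. apply (sumf_ind R a B).
    + intros g. destruct (R a g); simpl; auto.
Qed.


Lemma rcancel {T} mul one inv (Hg : IsGroup T mul one inv) a b g : mul a g = mul b g -> a = b.
Proof.
  intros H. rewrite <- (grp_one_r _ _ _ _ Hg a), <- (grp_one_r _ _ _ _ Hg b).
  rewrite <- (grp_inv_r _ _ _ _ Hg g), !(grp_assoc _ _ _ _ Hg), H. reflexivity.
Qed.

Lemma lcancel {T} mul one inv (Hg : IsGroup T mul one inv) a b g : mul g a = mul g b -> a = b.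
Proof.
  intros H. rewrite <- (grp_one_l _ _ _ _ Hg a), <- (grp_one_l _ _ _ _ Hg b).
  rewrite <- (grp_inv_l _ _ _ _ Hg g), <- !(grp_assoc _ _ _ _ Hg), H. reflexivity.
Qed.


Lemma iso {T} mul one inv Sg (Hg : IsGroup T mul one inv)
  (dec : forall x y : T, {x = y} + {x <> y}) (A Bl D : list T) r :
  NoDup A -> NoDup Bl -> NoDup D ->
  (forall g, In g Bl -> word_le mul one Sg r g) ->
  (forall y, In y D <-> (~ In y A /\ exists x s, In x A /\ In s Sg /\ y = mul x s)) ->
  2 * length A <= length Bl -> length A <= 2 * r * length D.
Proof.
  intros HA HB HD HBl HDs Hsz.
  set (inb := fun y => if in_dec dec y A then true else false).
  assert (Hinb : forall y, inb y = true <-> In y A).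
  { intros y; unfold inb; destruct (in_dec dec y A); split; auto; discriminate. }
  set (e := fun g => length (filter (fun a => negb (inb (mul a g))) A)).
  set (c := fun g => length (filter (fun a => inb (mul a g)) A)).
  assert (Hec : forall g, c g + e g = length A).
  { intros g. unfold c, e. apply filter_length. }
  assert (HeS : forall s, In s Sg -> e s <= length D).
  { intros s Hs. unfold e.
    rewrite <- (length_map (fun a => mul a s)).
    apply NoDup_incl_length.
    - apply NoDup_map_inj; [intros x y; apply rcancel with (1 := Hg)|]. apply NoDup_filter; auto.
    - intros y Hy. apply in_map_iff in Hy as [a [<- Ha]]. apply filter_In in Ha as [Ha Hn].
      apply HDs. split.
      + intros Hin. apply Hinb in Hin. rewrite Hin in Hn. discriminate.
      + exists a, s; auto. }
  assert (Hsub : forall g h, e (mul g h) <= e g + e h).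
  { intros g h. unfold e.
    set (Y := filter (fun a => inb (mul a g) && negb (inb (mul (mul a g) h))) A).
    apply Nat.le_trans with (length (filter (fun a => negb (inb (mul a g))) A) + length Y).
    - apply length_cover. { apply NoDup_filter; auto. }
      intros a Ha. apply filter_In in Ha as [Ha Hn].
      destruct (inb (mul a g)) eqn:E1.
      + right. unfold Y. apply filter_In. split; auto. rewrite <- (grp_assoc _ _ _ _ Hg). rewrite Hn, E1. reflexivity.
      + left. apply filter_In. split; auto. rewrite E1. reflexivity.
    - apply Nat.add_le_mono_l.
      rewrite <- (length_map (fun a => mul a g) Y).
      apply NoDup_incl_length.
      + apply NoDup_map_inj; [intros x y; apply rcancel with (1 := Hg)|]. apply NoDup_filter; auto.
      + intros y Hy. apply in_map_iff in Hy as [a [<- Ha]]. unfold Y in Ha.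
        apply filter_In in Ha as [Ha Hn]. apply andb_prop in Hn as [H1 H2].
        apply filter_In. split; auto. apply Hinb; auto. }
  assert (Hone : e one = 0).
  { unfold e. destruct (filter (fun a => negb (inb (mul a one))) A) as [|z l] eqn:Ef; auto.
    exfalso. assert (Hz : In z (filter (fun a => negb (inb (mul a one))) A)) by (rewrite Ef; left; auto).
    apply filter_In in Hz as [Hz Hn]. rewrite (grp_one_r _ _ _ _ Hg) in Hn.
    apply Hinb in Hz. rewrite Hz in Hn. discriminate. }
  assert (Hw : forall w, Forall (fun s => In s Sg) w -> e (word_eval mul one w) <= length w * length D).
  { induction w as [|s w IH]; intros Hf; simpl.
    - rewrite Hone. auto.
    - inversion Hf; subst. specialize (IH H2). specialize (HeS s H1).
      specialize (Hsub s (word_eval mul one w)). lia. }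
  assert (HeB : forall g, In g Bl -> e g <= r * length D).
  { intros g Hgl. destruct (HBl g Hgl) as [w [Hf [Hl Hev]]]. subst g.
    specialize (Hw w Hf). apply Nat.le_trans with (1 := Hw). apply Nat.mul_le_mono_r; auto. }
  assert (Hsc : sumf c Bl <= length A * length A).
  { unfold c. rewrite (double_count (fun a g => inb (mul a g)) A Bl).
    apply sumf_le_const. intros a Ha.
    rewrite <- (length_map (mul a)).
    apply NoDup_incl_length.
    - apply NoDup_map_inj; [intros x y; apply lcancel with (1 := Hg)|]. apply NoDup_filter; auto.
    - intros y Hy. apply in_map_iff in Hy as [g [<- Hg']]. apply filter_In in Hg' as [_ Hn].
      apply Hinb; auto. }
  assert (Hse : sumf e Bl <= length Bl * (r * length D)) by (apply sumf_le_const; auto).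
  assert (Hsum : sumf c Bl + sumf e Bl = length Bl * length A).
  { rewrite <- sumf_plus. rewrite (sumf_ext _ (fun _ => length A)) by auto.
    clear. induction Bl; simpl; lia. }
  nia.
Qed.


Lemma ball_cover {T} mul (one : T) Sg r : exists l, forall x, word_le mul one Sg r x -> In x l.
Proof.
  induction r as [|r [l IH]].
  - exists [one]. intros x [w [Hf [Hl Hev]]]. destruct w; [|simpl in Hl; lia]. simpl in Hev. subst. left; auto.
  - exists (one :: flat_map (fun s => map (mul s) l) Sg).
    intros x [w [Hf [Hl Hev]]]. destruct w as [|s w].
    + simpl in Hev. subst. left; auto.
    + right. inversion Hf; subst. simpl. apply in_flat_map. exists s. split; auto.
      apply in_map. apply IH. exists w. simpl in Hl. repeat split; auto. lia.
Qed.

Lemma vol_spec {T} (dec : forall x y : T, {x = y} + {x <> y}) mul (one : T) Sg r :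
  exists l, NoDup l /\ length l = vol mul one Sg r /\ forall x, In x l <-> word_le mul one Sg r x.
Proof.
  destruct (ball_cover mul one Sg r) as [l0 Hl0].
  destruct (finite_sub dec (word_le mul one Sg r) l0 Hl0) as [L [HL HLi]].
  assert (Hb : ball_card mul one Sg r (vol mul one Sg r)).
  { unfold vol. apply epsilon_spec. exists (length L), L. auto. }
  destruct Hb as [l [H1 [H2 H3]]]. exists l. auto.
Qed.

Lemma burn_cover {T} mul (Sg : list T) F0 A t : exists l, forall y, burning mul Sg F0 A t y -> In y l.
Proof.
  induction t as [|t [l IH]].
  - exists F0. simpl. auto.
  - exists (l ++ flat_map (fun x => map (mul x) Sg) l).
    intros y [Hy|[[x [s [Hx [Hs ->]]]] _]]; apply in_or_app; [left; auto|right].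
    apply in_flat_map. exists x. split; auto. apply in_map; auto.
Qed.

Lemma prot_cover {T} mul (Sg : list T) f F0 A : valid_strategy mul Sg f F0 A ->
  forall t, exists Q, length Q <= Psum f t /\ forall y, protected A t y -> In y Q.
Proof.
  intros Hv t. induction t as [|t [Q [HQ HQi]]].
  - exists []. split; simpl; auto. intros y [k [Hk _]]. lia.
  - destruct (Hv (S t) ltac:(lia)) as [[l [Hl Hli]] _].
    exists (Q ++ l). split.
    + rewrite length_app. simpl. lia.
    + intros y [k [Hk Hky]]. apply in_or_app.
      destruct (Nat.eq_dec k (S t)) as [->|Hne]; [right; auto|].
      left. apply HQi. exists k. split; auto. lia.
Qed.

Open Scope R_scope.

Theorem theorem3
  (T : Type) (mul : T -> T -> T) (one : T) (inv : T -> T) (Sg : list T)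
  (Hgrp : IsGroup T mul one inv)
  (Hsym : symmetric_set inv Sg)
  (Hgen : generates mul one Sg)
  (alpha : R) (Ha0 : 0 < alpha) (Ha1 : alpha < 1)
  (Hgrowth : exists C : nat, (0 < C)%nat /\
     forall n : nat, exp (Rpower (INR n) alpha) <= INR C * INR (vol mul one Sg (C * n)))
  (beta : R) (Hbeta : beta < alpha / (alpha + 1))
  (f : nat -> nat)
  (Hf : forall eps : R, 0 < eps -> exists N : nat, forall n : nat, (N <= n)%nat ->
          INR (f n) <= eps * exp (Rpower (INR n) beta)) :
  ~ containment mul Sg f.
Proof.
  assert (dec : forall x y : T, {x = y} + {x <> y}).
  { intros x y. apply excluded_middle_informative. }
  destruct Hgrowth as [C [HC Hgr]].
  destruct (growth_main alpha beta C f (vol mul one Sg) Ha0 Ha1 HC Hgr Hbeta Hf) as [B0 HB0].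
  destruct (large alpha (INR C * INR B0) Ha0) as [n0 [_ Hn0]].
  specialize (Hn0 (INR n0) (Rle_refl _)).
  assert (HvB : (B0 <= vol mul one Sg (C * n0))%nat).
  { apply INR_le. pose proof (Hgr n0). pose proof (exp_ineq1_le (Rpower (INR n0) alpha)).
    assert (HC1 : 1 <= INR C) by (apply (le_INR 1); lia).
    assert (INR C * INR B0 <= INR C * INR (vol mul one Sg (C * n0))) by lra.
    apply Rmult_le_reg_l with (INR C); lra. }
  destruct (vol_spec dec mul one Sg (C * n0)) as [F0 [HF0n [HF0l _]]].
  intros Hcont. destruct (Hcont F0) as [A [Hvalid [N HN]]].
  assert (Hfin : forall t, exists L, NoDup L /\ forall y, In y L <-> burning mul Sg F0 A t y).
  { intros t. destruct (burn_cover mul Sg F0 A t) as [l Hl]. apply (finite_sub dec _ l Hl). }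
  set (bl := fun t => proj1_sig (constructive_indefinite_description _ (Hfin t))).
  assert (Hbl : forall t, NoDup (bl t) /\ forall y, In y (bl t) <-> burning mul Sg F0 A t y).
  { intros t. unfold bl. destruct (constructive_indefinite_description _ (Hfin t)); simpl; auto. }
  set (b := fun t => length (bl t)).
  assert (Hmono : forall t, (b t <= b (S t))%nat).
  { intros t. unfold b. apply NoDup_incl_length; [apply Hbl|].
    intros y Hy. apply (proj2 (Hbl (S t))). simpl. left. apply (proj2 (Hbl t)). auto. }
  assert (Hstep : forall t r, (2 * b t <= vol mul one Sg r)%nat ->
        INR (b t) <= 2 * INR r * (INR (b (S t)) + INR (Psum f (S t)) - INR (b t))).
  { intros t r Hr.
    destruct (Hbl t) as [HLt HLti]. destruct (Hbl (S t)) as [HLt' HLti'].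
    set (Lt := bl t) in *. set (Lt' := bl (S t)) in *.
    destruct (finite_sub dec (fun y => ~ In y Lt /\ exists x s, In x Lt /\ In s Sg /\ y = mul x s)
                (flat_map (fun x => map (mul x) Sg) Lt)) as [D [HD HDi]].
    { intros y [_ [x [s [Hx [Hs ->]]]]]. apply in_flat_map. exists x. split; auto. apply in_map; auto. }
    destruct (vol_spec dec mul one Sg r) as [Bl [HBl [HBll HBli]]].
    assert (Hiso : (length Lt <= 2 * r * length D)%nat).
    { apply (iso mul one inv Sg Hgrp dec Lt Bl D r); auto.
      - intros g Hg. apply HBli; auto.
      - rewrite HBll. unfold b in Hr. auto. }
    destruct (prot_cover mul Sg f F0 A Hvalid (S t)) as [Q [HQ HQi]].
    assert (Hspread : (length (Lt ++ D) <= length Lt' + length Q)%nat).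
    { apply length_cover.
      - apply NoDup_app; auto. intros y Hy HyD. apply HDi in HyD. tauto.
      - intros y Hy. apply in_app_or in Hy as [Hy|Hy].
        + left. apply HLti'. simpl. left. apply HLti. auto.
        + destruct (classic (protected A (S t) y)) as [Hp|Hp]; [right; auto|].
          left. apply HLti'. simpl. right. split; auto.
          apply HDi in Hy as [_ [x [s [Hx [Hs ->]]]]]. exists x, s. split; auto. apply HLti; auto. }
    rewrite length_app in Hspread.
    unfold b. fold Lt Lt'.
    apply le_INR in Hiso. apply le_INR in Hspread. apply le_INR in HQ.
    rewrite !mult_INR in Hiso. rewrite !plus_INR in Hspread.
    simpl (INR 2) in Hiso.
    pose proof (pos_INR r). pose proof (pos_INR (length D)). nra. }
  assert (Hb0 : (B0 <= b O)%nat).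
  { unfold b. rewrite (card_unique (bl O) F0); [lia|apply Hbl|auto|].
    intros y. rewrite (proj2 (Hbl O)). simpl. tauto. }
  destruct (HB0 b Hmono Hstep Hb0 (b N)) as [t Ht].
  destruct (le_lt_dec N t) as [HNt|HtN].
  - assert (b t = b N).
    { unfold b. apply card_unique; try apply Hbl. intros y.
      rewrite (proj2 (Hbl t)), (proj2 (Hbl N)). apply HN; auto. }
    lia.
  - assert (forall k, (b t <= b (t + k))%nat).
    { induction k; [rewrite Nat.add_0_r; lia|]. rewrite Nat.add_succ_r. specialize (Hmono (t + k)%nat). lia. }
    specialize (H (N - t)%nat). replace (t + (N - t))%nat with N in H by lia. lia.
Qed.
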